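(* Let $q\in\mathrm{prob}(\{0,1\}^2)$. Then $\{(\pi,\chi^{(1)}):(\pi,\chi)\in\Theta_2,\ \mu_2(\pi,\chi)=q\}=\{\theta\in\Theta_1:\mu_1(\theta)=q_{\cdot+}\}$ and $\{(\pi,\chi^{(2)}):(\pi,\chi)\in\Theta_2,\ \mu_2(\pi,\chi)=q\}=\{\theta\in\Theta_1:\mu_1(\theta)=q_{+\cdot}\}$, where $q_{\cdot+}\in\mathrm{prob}(\{0,1\})$ is $\iota\mapsto q_{\iota0}+q_{\iota1}$ and $q_{+\cdot}$ is $\iota\mapsto q_{0\iota}+q_{1\iota}$.
   Context: For a finite set $\mathcal{X}$, $\mathrm{prob}(\mathcal{X})$ is the set of probability densities on $\mathcal{X}$; $\mathrm{markov}(\mathcal{X},\mathcal{Y})$ the set of maps $(x,y)\mapsto p_{y|x}$ with $p_{\cdot|x}\in\mathrm{prob}(\mathcal{Y})$ for all $x$. For $d\in\{1,2\}$ let $\Theta_d:=\mathrm{prob}(\{0,1\})\times\mathrm{markov}(\{0,1\},\{0,1\}^d)$ and $\mu_d(\pi,\chi)_j:=\sum_{i=0}^1\pi_i\chi_{j|i}$ for $j\in\{0,1\}^d$. For $(\pi,\chi)\in\Theta_2$ and $i,\iota\in\{0,1\}$, $\chi^{(1)}_{\iota|i}:=\chi_{\iota0|i}+\chi_{\iota1|i}$ and $\chi^{(2)}_{\iota|i}:=\chi_{0\iota|i}+\chi_{1\iota|i}$, so $\chi^{(1)},\chi^{(2)}\in\mathrm{markov}(\{0,1\},\{0,1\})$.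 *)

(* Defs.v *)
From HB Require Import structures.
From mathcomp Require Import all_boot all_order all_algebra.
Set Implicit Arguments. Unset Strict Implicit. Unset Printing Implicit Defensive.
Import Order.TTheory GRing.Theory Num.Theory.
Local Open Scope ring_scope.

Section Defs.
Variable R : realFieldType.

Definition is_prob (T : finType) (p : {ffun T -> R}) : Prop :=
  (forall t, 0 <= p t) /\ \sum_(t : T) p t = 1.

Definition is_markov (X Y : finType) (k : {ffun X -> {ffun Y -> R}}) : Prop :=
  forall x, is_prob (k x).

(* Theta_d, with {0,1}^1 identified with bool and {0,1}^2 with bool * bool *)
Definition Theta (Y : finType) (th : {ffun bool -> R} * {ffun bool -> {ffun Y -> R}}) : Prop :=
  is_prob th.1 /\ is_markov th.2.

Definition mu (Y : finType) (th : {ffun bool -> R} * {ffun bool -> {ffun Y -> R}}) : {ffun Y -> R} :=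
  [ffun j => \sum_(i : bool) th.1 i * th.2 i j].

Definition chi1 (chi : {ffun bool -> {ffun bool * bool -> R}}) : {ffun bool -> {ffun bool -> R}} :=
  [ffun i => [ffun iota => chi i (iota, false) + chi i (iota, true)]].

Definition chi2 (chi : {ffun bool -> {ffun bool * bool -> R}}) : {ffun bool -> {ffun bool -> R}} :=
  [ffun i => [ffun iota => chi i (false, iota) + chi i (true, iota)]].

Definition margL (q : {ffun bool * bool -> R}) : {ffun bool -> R} :=
  [ffun iota => q (iota, false) + q (iota, true)].

Definition margR (q : {ffun bool * bool -> R}) : {ffun bool -> R} :=
  [ffun iota => q (false, iota) + q (true, iota)].

End Defs.

(* Main.v *)
Require Import Defs.
From HB Require Import structures.
From mathcomp Require Import all_boot all_order all_algebra.
From mathcomp Require Import ring lra.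
Import Order.TTheory GRing.Theory Num.Theory.
Local Open Scope ring_scope.

Lemma sum_bb (R : realFieldType) (g : bool * bool -> R) :
  \sum_(t : bool * bool) g t = g (true,true) + g (true,false) + (g (false,true) + g (false,false)).
Proof.
have H := pair_bigA _ (fun a b : bool => g (a,b)).
rewrite (eq_bigr (fun p => g (p.1,p.2))); last by case.
by rewrite -H /= big_bool /= !big_bool.
Qed.

Section Gen.
Variable R : realFieldType.
Variable pair : bool -> bool -> bool * bool.
Variables p1 p2 : bool * bool -> bool.
Hypothesis hp : forall t, pair (p1 t) (p2 t) = t.
Hypothesis hp1 : forall a b, p1 (pair a b) = a.
Hypothesis hp2 : forall a b, p2 (pair a b) = b.
Hypothesis hsum : forall g : bool * bool -> R,
  \sum_(t : bool * bool) g t = \sum_(a : bool) \sum_(b : bool) g (pair a b).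

Lemma gen (q : {ffun bool * bool -> R}) :
  is_prob q ->
  forall th : {ffun bool -> R} * {ffun bool -> {ffun bool -> R}},
     (exists th2 : {ffun bool -> R} * {ffun bool -> {ffun bool * bool -> R}},
        [/\ Theta th2, mu th2 = q & th = (th2.1,
          [ffun i => [ffun iota => th2.2 i (pair iota false) + th2.2 i (pair iota true)]])])
     <-> (Theta th /\ mu th = [ffun iota => q (pair iota false) + q (pair iota true)]).
Proof.
move=> [q0 q1] [pi ka]; split.
  move=> [[pi2 chi] [[[pi0 pi1] chim] Hmu ->]] /=.
  split; first split => //=.
    move=> i; split.
      by move=> t; rewrite !ffunE addr_ge0 //; case: (chim i).
    case: (chim i) => _ <-; rewrite hsum; apply: eq_bigr => a _.
    by rewrite ffunE ffunE big_bool addrC.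
  apply/ffunP => a; rewrite !ffunE -Hmu !ffunE /= !big_bool /=. rewrite !ffunE; ring.
move=> [[[pi0 pi1] kam] Hmu] /=.
pose s a := q (pair a false) + q (pair a true).
pose r a b := if s a == 0 then 2^-1 else q (pair a b) / s a.
have sge0 a : 0 <= s a by rewrite addr_ge0.
have rge0 a b : 0 <= r a b.
  rewrite /r; case: ifP => _; first by rewrite invr_ge0 ler0n.
  by rewrite divr_ge0.
have rsum a : r a false + r a true = 1.
  rewrite /r; case: ifP => h; first lra.
  by rewrite -mulrDl mulfV // h.
have rq a b : s a * r a b = q (pair a b).
  rewrite /r; case: ifP => h.
    move/eqP: h => h; rewrite h mul0r.
    have := q0 (pair a false); have := q0 (pair a true); rewrite /s in h.
    case: b; lra.
  by rewrite mulrC -mulrA mulVf ?h // mulr1.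
exists (pi, [ffun i => [ffun t => ka i (p1 t) * r (p1 t) (p2 t)]]); split => /=.
- split => //= i; split.
    by move=> t; rewrite !ffunE mulr_ge0 //; case: (kam i).
  rewrite hsum; case: (kam i) => _ <-; apply: eq_bigr => a _.
  by rewrite big_bool /= !ffunE !hp1 !hp2 -mulrDr addrC rsum mulr1.
- apply/ffunP => t; rewrite ffunE -{2}(hp t).
  rewrite -rq /s; have := congr1 (fun f : {ffun bool -> R} => f (p1 t)) Hmu; rewrite !ffunE => <-.
  rewrite mulr_suml; apply: eq_bigr => i _; rewrite !ffunE; ring.
- congr (_, _); apply/ffunP => i; rewrite !ffunE; apply/ffunP => a.
  by rewrite !ffunE !hp1 !hp2 -mulrDr rsum mulr1.
Qed.
End Gen.

Theorem lemma2 (R : realFieldType) (q : {ffun bool * bool -> R}) :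
  is_prob q ->
  (forall th : {ffun bool -> R} * {ffun bool -> {ffun bool -> R}},
     (exists th2 : {ffun bool -> R} * {ffun bool -> {ffun bool * bool -> R}},
        [/\ Theta th2, mu th2 = q & th = (th2.1, chi1 th2.2)])
     <-> (Theta th /\ mu th = margL q))
  /\
  (forall th : {ffun bool -> R} * {ffun bool -> {ffun bool -> R}},
     (exists th2 : {ffun bool -> R} * {ffun bool -> {ffun bool * bool -> R}},
        [/\ Theta th2, mu th2 = q & th = (th2.1, chi2 th2.2)])
     <-> (Theta th /\ mu th = margR q)).
Proof.
move=> hq; split.
  apply: (@gen R (fun a b => (a, b)) fst snd) => //; first by case.
  by move=> g; rewrite sum_bb !big_bool /=; ring.
apply: (@gen R (fun a b => (b, a)) snd fst) => //; first by case.
by move=> g; rewrite sum_bb !big_bool /=; ring.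
Qed.
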